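(* The forgetful functor $U\colon\mathbf{Lens}\to\mathbf{Cat}$ creates pushouts of monic lenses with discrete opfibrations. Explicitly: let $J\colon\mathbf{A}\to\mathbf{B}$ be a monic lens and $F\colon\mathbf{A}\to\mathbf{C}$ a lens whose get functor is a discrete opfibration, and let $\bar F\colon\mathbf{B}\to\mathbf{D}$, $\bar J\colon\mathbf{C}\to\mathbf{D}$ be a pushout of $UJ$ and $UF$ in $\mathbf{Cat}$. Then there are unique lenses with get functors $\bar F$ and $\bar J$, and with these lens structures $\bar F\circ J=\bar J\circ F$ is a pushout square in $\mathbf{Lens}$.
   Context: A lens $F\colon \mathbf{A}\to\mathbf{B}$ between small categories consists of a functor $F\colon\mathbf{A}\to\mathbf{B}$ (the get functor) together with, for each object $A$ of $\mathbf{A}$, a function $\varphi_{F,A}$ from the set of morphisms of $\mathbf{B}$ with domain $FA$ to the set of morphisms of $\mathbf{A}$ with domain $A$, such that: $F(\varphi_{F,A}b)=b$; $\varphi_{F,A}(\mathrm{id}_{FA})=\mathrm{id}_A$; and $\varphi_{F,A}(b'\circ b)=\varphi_{F,A'}(b')\circ\varphi_{F,A}(b)$ whenever $b$ has domain $FA$, $A'$ is the codomain of $\varphi_{F,A}b$, and $b'$ has domain $FA'$. $\mathbf{Lens}$ is the category of small categories and lenses, with composite of $F\colon\mathbf{A}\to\mathbf{B}$, $G\colon\mathbf{B}\to\mathbf{C}$ having get functor $G\circ F$ and puts $\varphi_{G\circ F,A}(c)=\varphi_{F,A}(\varphi_{G,FA}(c))$. $U\colon\mathbf{Lens}\to\mathbf{Cat}$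 sends a lens to its get functor. A functor $F\colon\mathbf{A}\to\mathbf{B}$ is a discrete opfibration if for each object $A$ and each morphism $b$ of $\mathbf{B}$ with domain $FA$ there is a unique morphism $a$ of $\mathbf{A}$ with domain $A$ and $Fa=b$; a discrete opfibration has exactly one lens structure. ''Monic lens'' means monomorphism in $\mathbf{Lens}$. *)

(* Defs.v *)
(* A small category presented single-sortedly: a type of objects, a type of
   morphisms, domain/codomain, identities, and composition [cmp g f] = g ∘ f,
   which is only meaningful (and only constrained) when [cod f = dom g]. *)
Record Cat := {
  ob : Type;
  mor : Type;
  dom : mor -> ob;
  cod : mor -> ob;
  idm : ob -> mor;
  cmp : mor -> mor -> mor;
  dom_idm : forall x, dom (idm x) = x;
  cod_idm : forall x, cod (idm x) = x;
  dom_cmp : forall f g, cod f = dom g -> dom (cmp g f) = dom f;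
  cod_cmp : forall f g, cod f = dom g -> cod (cmp g f) = cod g;
  cmp_idl : forall f, cmp (idm (cod f)) f = f;
  cmp_idr : forall f, cmp f (idm (dom f)) = f;
  cmp_assoc : forall f g h, cod f = dom g -> cod g = dom h ->
                cmp h (cmp g f) = cmp (cmp h g) f
}.

Arguments dom {c} _.
Arguments cod {c} _.
Arguments idm {c} _.
Arguments cmp {c} _ _.

Record FunD (A B : Cat) := {
  fo : ob A -> ob B;
  fm : mor A -> mor B
}.
Arguments fo {A B} _ _.
Arguments fm {A B} _ _.

Definition is_functor {A B : Cat} (F : FunD A B) : Prop :=
  (forall f, dom (fm F f) = fo F (dom f)) /\
  (forall f, cod (fm F f) = fo F (cod f)) /\
  (forall x, fm F (idm x) = idm (fo F x)) /\
  (forall f g, cod f = dom g -> fm F (cmp g f) = cmp (fm F g) (fm F f)).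

Definition fun_eq {A B : Cat} (F G : FunD A B) : Prop :=
  (forall x, fo F x = fo G x) /\ (forall f, fm F f = fm G f).

Definition fcomp {A B C : Cat} (G : FunD B C) (F : FunD A B) : FunD A C :=
  {| fo := fun x => fo G (fo F x); fm := fun f => fm G (fm F f) |}.

Definition discrete_opfibration {A B : Cat} (F : FunD A B) : Prop :=
  forall (x : ob A) (b : mor B), dom b = fo F x ->
    exists! a : mor A, dom a = x /\ fm F a = b.

(* Lens structure (puts) on a functor F: p x b = φ_{F,x}(b), meaningful for
   dom b = F x. *)
Definition is_lens_structure {A B : Cat} (F : FunD A B)
    (p : ob A -> mor B -> mor A) : Prop :=
  (forall x b, dom b = fo F x -> dom (p x b) = x /\ fm F (p x b) = b) /\
  (forall x, p x (idm (fo F x)) = idm x) /\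
  (forall x b b', dom b = fo F x -> dom b' = fo F (cod (p x b)) ->
     p x (cmp b' b) = cmp (p (cod (p x b)) b') (p x b)).

Record LensD (A B : Cat) := {
  lget : FunD A B;
  lput : ob A -> mor B -> mor A
}.
Arguments lget {A B} _.
Arguments lput {A B} _ _ _.

Definition is_lens {A B : Cat} (L : LensD A B) : Prop :=
  is_functor (lget L) /\ is_lens_structure (lget L) (lput L).

Definition lens_eq {A B : Cat} (L M : LensD A B) : Prop :=
  fun_eq (lget L) (lget M) /\
  (forall x b, dom b = fo (lget L) x -> lput L x b = lput M x b).

Definition lcomp {A B C : Cat} (G : LensD B C) (F : LensD A B) : LensD A C :=
  {| lget := fcomp (lget G) (lget F);
     lput := fun x c => lput F x (lput G (fo (lget F) x) c) |}.

Definition lens_monic {A B : Cat} (J : LensD A B) : Prop :=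
  forall (X : Cat) (G H : LensD X A), is_lens G -> is_lens H ->
    lens_eq (lcomp J G) (lcomp J H) -> lens_eq G H.

Definition is_pushout_cat {A B C D : Cat} (J : FunD A B) (F : FunD A C)
    (Fb : FunD B D) (Jb : FunD C D) : Prop :=
  fun_eq (fcomp Fb J) (fcomp Jb F) /\
  forall (X : Cat) (P : FunD B X) (Q : FunD C X),
    is_functor P -> is_functor Q -> fun_eq (fcomp P J) (fcomp Q F) ->
    exists K : FunD D X,
      is_functor K /\ fun_eq (fcomp K Fb) P /\ fun_eq (fcomp K Jb) Q /\
      (forall K' : FunD D X, is_functor K' ->
         fun_eq (fcomp K' Fb) P -> fun_eq (fcomp K' Jb) Q -> fun_eq K' K).

Definition is_pushout_lens {A B C D : Cat} (J : LensD A B) (F : LensD A C)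
    (Fb : LensD B D) (Jb : LensD C D) : Prop :=
  lens_eq (lcomp Fb J) (lcomp Jb F) /\
  forall (X : Cat) (P : LensD B X) (Q : LensD C X),
    is_lens P -> is_lens Q -> lens_eq (lcomp P J) (lcomp Q F) ->
    exists K : LensD D X,
      is_lens K /\ lens_eq (lcomp K Fb) P /\ lens_eq (lcomp K Jb) Q /\
      (forall K' : LensD D X, is_lens K' ->
         lens_eq (lcomp K' Fb) P -> lens_eq (lcomp K' Jb) Q -> lens_eq K' K).

(* Main.v *)
Require Import Defs.
From Stdlib Require Import Classical ClassicalEpsilon ProofIrrelevance.

Lemma sig_ext {T} {P : T -> Prop} (x y : sig P) : proj1_sig x = proj1_sig y -> x = y.
Proof. destruct x, y; simpl; intros ->. f_equal. apply proof_irrelevance. Qed.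

Section KP.
Variables (A B : Cat) (J : LensD A B).
Hypothesis HJ : is_lens J.
Local Notation jo := (fo (lget J)).
Local Notation jm := (fm (lget J)).
Definition KOb := {p : ob A * ob A | jo (fst p) = jo (snd p)}.
Definition KMor := {q : mor A * mor A | jm (fst q) = jm (snd q)}.

Lemma Jf1 : forall f, dom (jm f) = jo (dom f). Proof. apply HJ. Qed.
Lemma Jf2 : forall f, cod (jm f) = jo (cod f). Proof. apply HJ. Qed.
Lemma Jf3 : forall x, jm (idm x) = idm (jo x). Proof. apply HJ. Qed.
Lemma Jf4 : forall f g, cod f = dom g -> jm (cmp g f) = cmp (jm g) (jm f). Proof. apply HJ. Qed.
Lemma Jl1 : forall x b, dom b = jo x -> dom (lput J x b) = x /\ jm (lput J x b) = b.
Proof. apply HJ. Qed.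
Lemma Jl2 : forall x, lput J x (idm (jo x)) = idm x. Proof. apply HJ. Qed.
Lemma Jl3 : forall x b b', dom b = jo x -> dom b' = jo (cod (lput J x b)) ->
     lput J x (cmp b' b) = cmp (lput J (cod (lput J x b)) b') (lput J x b).
Proof. apply HJ. Qed.

Lemma kdom_ok (q : KMor) : jo (dom (fst (proj1_sig q))) = jo (dom (snd (proj1_sig q))).
Proof. destruct q as [[f g] e]; simpl in *. rewrite <- !Jf1, e. reflexivity. Qed.
Lemma kcod_ok (q : KMor) : jo (cod (fst (proj1_sig q))) = jo (cod (snd (proj1_sig q))).
Proof. destruct q as [[f g] e]; simpl in *. rewrite <- !Jf2, e. reflexivity. Qed.
Definition kdom (q : KMor) : KOb :=
  exist _ (dom (fst (proj1_sig q)), dom (snd (proj1_sig q))) (kdom_ok q).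
Definition kcod (q : KMor) : KOb :=
  exist _ (cod (fst (proj1_sig q)), cod (snd (proj1_sig q))) (kcod_ok q).
Lemma kidm_ok (x : KOb) : jm (idm (fst (proj1_sig x))) = jm (idm (snd (proj1_sig x))).
Proof. destruct x as [[a b] e]; simpl in *. rewrite !Jf3, e. reflexivity. Qed.
Definition kidm (x : KOb) : KMor :=
  exist _ (idm (fst (proj1_sig x)), idm (snd (proj1_sig x))) (kidm_ok x).
Definition kcomp (g f : KMor) : Prop :=
  cod (fst (proj1_sig f)) = dom (fst (proj1_sig g)) /\ cod (snd (proj1_sig f)) = dom (snd (proj1_sig g)).
Lemma kcmp_ok (g f : KMor) (h : kcomp g f) :
  jm (cmp (fst (proj1_sig g)) (fst (proj1_sig f))) = jm (cmp (snd (proj1_sig g)) (snd (proj1_sig f))).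
Proof.
  destruct g as [[g1 g2] eg]; destruct f as [[f1 f2] ef]; destruct h as [h1 h2]; simpl in *.
  rewrite !Jf4 by assumption. rewrite eg, ef. reflexivity.
Qed.
Definition kcmp (g f : KMor) : KMor :=
  match excluded_middle_informative (kcomp g f) with
  | left h => exist _ (cmp (fst (proj1_sig g)) (fst (proj1_sig f)), cmp (snd (proj1_sig g)) (snd (proj1_sig f))) (kcmp_ok g f h)
  | right _ => f end.

Lemma kcomp_of (f g : KMor) : kcod f = kdom g -> kcomp g f.
Proof.
  intro e. split.
  - exact (f_equal (fun x : KOb => fst (proj1_sig x)) e).
  - exact (f_equal (fun x : KOb => snd (proj1_sig x)) e).
Qed.

Lemma kcmp_eq (g f : KMor) (h : kcomp g f) :
  proj1_sig (kcmp g f) = (cmp (fst (proj1_sig g)) (fst (proj1_sig f)), cmp (snd (proj1_sig g)) (snd (proj1_sig f))).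
Proof. unfold kcmp. destruct excluded_middle_informative; [reflexivity| contradiction]. Qed.

Definition KP : Cat.
Proof.
  refine (@Build_Cat KOb KMor kdom kcod kidm kcmp _ _ _ _ _ _ _).
  - intros [[a b] e]; apply sig_ext; simpl; rewrite !dom_idm; reflexivity.
  - intros [[a b] e]; apply sig_ext; simpl; rewrite !cod_idm; reflexivity.
  - intros f g H. pose proof (kcomp_of f g H) as h. apply sig_ext. simpl.
    rewrite kcmp_eq by exact h. destruct h; simpl. rewrite !dom_cmp by assumption. reflexivity.
  - intros f g H. pose proof (kcomp_of f g H) as h. apply sig_ext. simpl.
    rewrite kcmp_eq by exact h. destruct h; simpl. rewrite !cod_cmp by assumption. reflexivity.
  - intros f. assert (h : kcomp (kidm (kcod f)) f) by (split; simpl; rewrite dom_idm; reflexivity).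
    apply sig_ext. rewrite kcmp_eq by exact h. destruct f as [[f1 f2] e]; simpl. rewrite !cmp_idl. reflexivity.
  - intros f. assert (h : kcomp f (kidm (kdom f))) by (split; simpl; rewrite cod_idm; reflexivity).
    apply sig_ext. rewrite kcmp_eq by exact h. destruct f as [[f1 f2] e]; simpl. rewrite !cmp_idr. reflexivity.
  - intros f g k H1 H2. pose proof (kcomp_of f g H1) as h1. pose proof (kcomp_of g k H2) as h2.
    assert (h3 : kcomp k (kcmp g f)).
    { destruct h1, h2; split; rewrite kcmp_eq by (split; assumption); simpl; rewrite cod_cmp; assumption. }
    assert (h4 : kcomp (kcmp k g) f).
    { destruct h1, h2; split; rewrite kcmp_eq by (split; assumption); simpl; rewrite dom_cmp; assumption. }
    apply sig_ext. rewrite (kcmp_eq _ _ h3), (kcmp_eq _ _ h4), (kcmp_eq _ _ h1), (kcmp_eq _ _ h2).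
    destruct h1, h2. simpl. rewrite !cmp_assoc by assumption. reflexivity.
Defined.
End KP.

Section KP2.
Variables (A B : Cat) (J : LensD A B).
Hypothesis HJ : is_lens J.
Local Notation jo := (fo (lget J)).
Local Notation jm := (fm (lget J)).

Lemma putG_ok (x : KOb A B J) (f : mor A) (h : dom f = fst (proj1_sig x)) :
  jm f = jm (lput J (snd (proj1_sig x)) (jm f)).
Proof.
  symmetry. apply (Jl1 A B J HJ). rewrite (Jf1 A B J HJ), h. destruct x; simpl. exact e.
Qed.
Lemma putH_ok (x : KOb A B J) (f : mor A) (h : dom f = snd (proj1_sig x)) :
  jm (lput J (fst (proj1_sig x)) (jm f)) = jm f.
Proof.
  apply (Jl1 A B J HJ). rewrite (Jf1 A B J HJ), h. destruct x; simpl. symmetry; exact e.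
Qed.

Lemma KP_cmp g f : @cmp (KP A B J HJ) g f = kcmp A B J HJ g f. Proof. reflexivity. Qed.
Lemma KP_dom f : @dom (KP A B J HJ) f = kdom A B J HJ f. Proof. reflexivity. Qed.
Lemma KP_cod f : @cod (KP A B J HJ) f = kcod A B J HJ f. Proof. reflexivity. Qed.
Lemma KP_idm x : @idm (KP A B J HJ) x = kidm A B J HJ x. Proof. reflexivity. Qed.

Definition putG (x : KOb A B J) (f : mor A) : KMor A B J :=
  match excluded_middle_informative (dom f = fst (proj1_sig x)) with
  | left h => exist _ (f, lput J (snd (proj1_sig x)) (jm f)) (putG_ok x f h)
  | right _ => kidm A B J HJ x end.
Definition putH (x : KOb A B J) (f : mor A) : KMor A B J :=
  match excluded_middle_informative (dom f = snd (proj1_sig x)) with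
  | left h => exist _ (lput J (fst (proj1_sig x)) (jm f), f) (putH_ok x f h)
  | right _ => kidm A B J HJ x end.

Definition LG : LensD (KP A B J HJ) A :=
  {| lget := {| fo := fun x : ob (KP A B J HJ) => fst (proj1_sig (x : KOb A B J)); fm := fun q : mor (KP A B J HJ) => fst (proj1_sig (q : KMor A B J)) |};
     lput := putG |}.
Definition LH : LensD (KP A B J HJ) A :=
  {| lget := {| fo := fun x : ob (KP A B J HJ) => snd (proj1_sig (x : KOb A B J)); fm := fun q : mor (KP A B J HJ) => snd (proj1_sig (q : KMor A B J)) |};
     lput := putH |}.

Lemma putG_eq x f (h : dom f = fst (proj1_sig x)) :
  proj1_sig (putG x f) = (f, lput J (snd (proj1_sig x)) (jm f)).
Proof. unfold putG. destruct excluded_middle_informative; [reflexivity|contradiction]. Qed.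
Lemma putH_eq x f (h : dom f = snd (proj1_sig x)) :
  proj1_sig (putH x f) = (lput J (fst (proj1_sig x)) (jm f), f).
Proof. unfold putH. destruct excluded_middle_informative; [reflexivity|contradiction]. Qed.

Lemma LG_lens : is_lens LG.
Proof.
  split.
  - split; [|split; [|split]].
    + intros f; reflexivity.
    + intros f; reflexivity.
    + intros x; reflexivity.
    + intros f g H. unfold LG; cbn [lget fm fo]. rewrite KP_cmp, (kcmp_eq A B J HJ) by (apply (kcomp_of A B J HJ); exact H). reflexivity.
  - split; [|split].
    + intros x b hb. cbn in hb. split.
      * apply sig_ext. rewrite KP_dom. unfold LG; cbn [lput]. unfold kdom; cbn [proj1_sig].
        rewrite putG_eq by exact hb. destruct x as [[a1 a2] e]. cbn in *. rewrite hb. f_equal.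
        apply (Jl1 A B J HJ). rewrite (Jf1 A B J HJ), hb. exact e.
      * unfold LG; cbn. rewrite putG_eq by exact hb. reflexivity.
    + intros x. unfold LG; cbn [lput lget fo]. apply sig_ext. rewrite KP_idm.
      rewrite putG_eq by apply dom_idm. destruct x as [[a1 a2] e]; cbn in *. f_equal.
      rewrite (Jf3 A B J HJ), e. apply (Jl2 A B J HJ).
    + intros x b b' hb hb'. destruct x as [[a1 a2] e]. unfold LG in *; cbn [lput lget fo] in *.
      cbn in hb. rewrite KP_cod in hb'. unfold kcod in hb'. cbn [proj1_sig fst] in hb'.
      rewrite (putG_eq (exist _ (a1,a2) e) b hb) in hb'. cbn in hb'.
      cbn in e.
      set (X := exist (fun p : ob A * ob A => jo (fst p) = jo (snd p)) (a1, a2) e).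
      set (p := lput J a2 (jm b)).
      assert (Hq : proj1_sig (putG X b) = (b, p)) by (apply putG_eq; exact hb).
      assert (hdb : dom (jm b) = jo a2) by (rewrite (Jf1 A B J HJ), hb; exact e).
      destruct (Jl1 A B J HJ a2 (jm b) hdb) as [hp1 hp2]. fold p in hp1, hp2.
      assert (hdb' : dom (jm b') = jo (cod p)).
      { rewrite (Jf1 A B J HJ), hb', <- (Jf2 A B J HJ), <- (Jf2 A B J HJ), hp2. reflexivity. }
      destruct (Jl1 A B J HJ (cod p) (jm b') hdb') as [hr1 hr2].
      rewrite KP_cod.
      assert (hy : dom b' = fst (proj1_sig (kcod A B J HJ (putG X b)))) by (cbn; rewrite Hq; exact hb').
      assert (Hr : proj1_sig (putG (kcod A B J HJ (putG X b)) b') = (b', lput J (cod p) (jm b'))).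
      { rewrite (putG_eq _ b' hy). f_equal. cbn. rewrite Hq. reflexivity. }
      assert (hk : kcomp A B J (putG (kcod A B J HJ (putG X b)) b') (putG X b)).
      { unfold kcomp. rewrite Hq, Hr. cbn. split; [exact (eq_sym hb') | exact (eq_sym hr1)]. }
      apply sig_ext. rewrite KP_cmp, (kcmp_eq A B J HJ _ _ hk), Hq, Hr. cbn.
      rewrite putG_eq by (cbn; rewrite dom_cmp; [exact hb| exact (eq_sym hb')]).
      cbn. f_equal. rewrite (Jf4 A B J HJ) by exact (eq_sym hb').
      apply (Jl3 A B J HJ); assumption.
Qed.
Lemma LH_lens : is_lens LH.
Proof.
  split.
  - split; [|split; [|split]].
    + intros f; reflexivity.
    + intros f; reflexivity.
    + intros x; reflexivity.
    + intros f g H. unfold LH; cbn [lget fm fo]. rewrite KP_cmp, (kcmp_eq A B J HJ) by (apply (kcomp_of A B J HJ); exact H). reflexivity.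
  - split; [|split].
    + intros x b hb. cbn in hb. split.
      * apply sig_ext. rewrite KP_dom. unfold LH; cbn [lput]. unfold kdom; cbn [proj1_sig].
        rewrite putH_eq by exact hb. destruct x as [[a1 a2] e]. cbn in *. rewrite hb. f_equal.
        apply (Jl1 A B J HJ). rewrite (Jf1 A B J HJ), hb. exact (eq_sym e).
      * unfold LH; cbn. rewrite putH_eq by exact hb. reflexivity.
    + intros x. unfold LH; cbn [lput lget fo]. apply sig_ext. rewrite KP_idm.
      rewrite putH_eq by apply dom_idm. destruct x as [[a1 a2] e]; cbn in *. f_equal.
      rewrite (Jf3 A B J HJ), <- e. apply (Jl2 A B J HJ).
    + intros x b b' hb hb'. destruct x as [[a1 a2] e]. unfold LH in *; cbn [lput lget fo] in *.
      cbn in hb. rewrite KP_cod in hb'. unfold kcod in hb'. cbn [proj1_sig fst] in hb'.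
      rewrite (putH_eq (exist _ (a1,a2) e) b hb) in hb'. cbn in hb'.
      cbn in e.
      set (X := exist (fun p : ob A * ob A => jo (fst p) = jo (snd p)) (a1, a2) e).
      set (p := lput J a1 (jm b)).
      assert (Hq : proj1_sig (putH X b) = (p, b)) by (apply putH_eq; exact hb).
      assert (hdb : dom (jm b) = jo a1) by (rewrite (Jf1 A B J HJ), hb; exact (eq_sym e)).
      destruct (Jl1 A B J HJ a1 (jm b) hdb) as [hp1 hp2]. fold p in hp1, hp2.
      assert (hdb' : dom (jm b') = jo (cod p)).
      { rewrite (Jf1 A B J HJ), hb', <- (Jf2 A B J HJ), <- (Jf2 A B J HJ), hp2. reflexivity. }
      destruct (Jl1 A B J HJ (cod p) (jm b') hdb') as [hr1 hr2].
      rewrite KP_cod.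
      assert (hy : dom b' = snd (proj1_sig (kcod A B J HJ (putH X b)))) by (cbn; rewrite Hq; exact hb').
      assert (Hr : proj1_sig (putH (kcod A B J HJ (putH X b)) b') = (lput J (cod p) (jm b'), b')).
      { rewrite (putH_eq _ b' hy). f_equal. cbn. rewrite Hq. reflexivity. }
      assert (hk : kcomp A B J (putH (kcod A B J HJ (putH X b)) b') (putH X b)).
      { unfold kcomp. rewrite Hq, Hr. cbn. split; [exact (eq_sym hr1) | exact (eq_sym hb')]. }
      apply sig_ext. rewrite KP_cmp, (kcmp_eq A B J HJ _ _ hk), Hq, Hr. cbn.
      rewrite putH_eq by (cbn; rewrite dom_cmp; [exact hb| exact (eq_sym hb')]).
      cbn. f_equal. rewrite (Jf4 A B J HJ) by exact (eq_sym hb').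
      apply (Jl3 A B J HJ); assumption.
Qed.

Lemma LG_LH_eq : lens_eq (lcomp J LG) (lcomp J LH).
Proof.
  split; [split|].
  - intros [[a1 a2] e]; exact e.
  - intros [[f1 f2] e]; exact e.
  - intros [[a1 a2] e] c hc. cbn in hc, e. unfold lcomp, LG, LH; cbn [lput lget fo].
    assert (hc2 : dom c = jo a2) by (rewrite hc; exact e).
    destruct (Jl1 A B J HJ a1 c hc) as [h11 h12].
    destruct (Jl1 A B J HJ a2 c hc2) as [h21 h22].
    apply sig_ext. rewrite putG_eq by exact h11. rewrite putH_eq by exact h21. cbn.
    rewrite h12, h22. reflexivity.
Qed.

Lemma monic_props : lens_monic J ->
  (forall a a', jo a = jo a' -> a = a') /\ (forall f g, jm f = jm g -> f = g).
Proof.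
  intro M. destruct (M _ LG LH LG_lens LH_lens LG_LH_eq) as [[Ho Hm] _].
  split.
  - intros a a' e. exact (Ho (exist (fun p : ob A * ob A => jo (fst p) = jo (snd p)) (a, a') e)).
  - intros f g e. exact (Hm (exist (fun p : mor A * mor A => jm (fst p) = jm (snd p)) (f, g) e)).
Qed.
End KP2.

Section D0.
Variables (A B C : Cat) (J : LensD A B) (F : LensD A C).
Hypothesis HJ : is_lens J.
Hypothesis HF : is_lens F.
Hypothesis M1 : forall a a', fo (lget J) a = fo (lget J) a' -> a = a'.
Hypothesis M2 : forall f g, fm (lget J) f = fm (lget J) g -> f = g.
Hypothesis HD : discrete_opfibration (lget F).
Local Notation jo := (fo (lget J)).
Local Notation jm := (fm (lget J)).
Local Notation Fo := (fo (lget F)).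
Local Notation Fm := (fm (lget F)).
Local Notation pj := (lput J).
Local Notation pf := (lput F).

Lemma Ff1 : forall f, dom (Fm f) = Fo (dom f). Proof. apply HF. Qed.
Lemma Ff2 : forall f, cod (Fm f) = Fo (cod f). Proof. apply HF. Qed.
Lemma Ff3 : forall x, Fm (idm x) = idm (Fo x). Proof. apply HF. Qed.
Lemma Ff4 : forall f g, cod f = dom g -> Fm (cmp g f) = cmp (Fm g) (Fm f). Proof. apply HF. Qed.
Lemma Fl1 : forall x b, dom b = Fo x -> dom (pf x b) = x /\ Fm (pf x b) = b.
Proof. apply HF. Qed.
Lemma Fl2 : forall x, pf x (idm (Fo x)) = idm x. Proof. apply HF. Qed.
Lemma Fl3 : forall x b b', dom b = Fo x -> dom b' = Fo (cod (pf x b)) ->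
     pf x (cmp b' b) = cmp (pf (cod (pf x b)) b') (pf x b).
Proof. apply HF. Qed.

Lemma pf_Fm a b : dom b = a -> pf a (Fm b) = b.
Proof.
  intro h. assert (hd : dom (Fm b) = Fo a) by (rewrite Ff1, h; reflexivity).
  destruct (HD a (Fm b) hd) as [u [_ Hu]].
  destruct (Fl1 a (Fm b) hd) as [h1 h2].
  rewrite <- (Hu _ (conj h1 h2)). apply Hu. split; auto.
Qed.
Lemma pj_jm a b : dom b = a -> pj a (jm b) = b.
Proof.
  intro h. assert (hd : dom (jm b) = jo a) by (rewrite (Jf1 A B J HJ), h; reflexivity).
  apply M2. apply (Jl1 A B J HJ a (jm b) hd).
Qed.

Definition inA (b : ob B) : Prop := exists a, jo a = b.
Definition aof (b : ob B) (h : inA b) : ob A := proj1_sig (constructive_indefinite_description _ h).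
Lemma aof_spec b h : jo (aof b h) = b.
Proof. unfold aof. destruct constructive_indefinite_description; assumption. Qed.
Lemma aof_eq a b h : jo a = b -> aof b h = a.
Proof. intro e. apply M1. rewrite aof_spec. auto. Qed.

Definition cls (b : ob B) : ob C + ob B :=
  match excluded_middle_informative (inA b) with
  | left h => inl (Fo (aof b h))
  | right _ => inr b end.
Lemma cls_in a b : jo a = b -> cls b = inl (Fo a).
Proof.
  intro e. unfold cls. destruct excluded_middle_informative as [h|h].
  - rewrite (aof_eq a b h e). reflexivity.
  - exfalso; apply h; exists a; exact e.
Qed.
Lemma cls_out b : ~ inA b -> cls b = inr b.
Proof. intro n. unfold cls. destruct excluded_middle_informative as [h|h]; [contradiction|reflexivity]. Qed.

Lemma inA_cod k : inA (dom k) -> inA (cod k).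
Proof.
  intros [a ha]. assert (hd : dom k = jo a) by auto.
  destruct (Jl1 A B J HJ a k hd) as [h1 h2].
  exists (cod (pj a k)). rewrite <- (Jf2 A B J HJ), h2. reflexivity.
Qed.

Definition ob0 := (ob C + ob B)%type.
Definition mor0 := (mor C + mor B)%type.
Definition dom0 (f : mor0) : ob0 :=
  match f with inl m => inl (dom m) | inr k => inr (dom k) end.
Definition cod0 (f : mor0) : ob0 :=
  match f with
  | inl m => inl (cod m)
  | inr k => match excluded_middle_informative (inA (dom k)) with
             | left _ => inr (cod k)
             | right _ => cls (cod k) end end.
Definition idm0 (x : ob0) : mor0 :=
  match x with inl c => inl (idm c) | inr b => inr (idm b) end.
Definition cmp0 (g f : mor0) : mor0 :=
  match g, f with
  | inl m', inl m => inl (cmp m' m)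
  | inr k', inr k => inr (cmp k' k)
  | inl m, inr k =>
      match excluded_middle_informative (inA (dom k)) with
      | left _ => inr k
      | right _ => match excluded_middle_informative (inA (cod k)) with
                   | left h => inr (cmp (jm (pf (aof _ h) m)) k)
                   | right _ => inr k end end
  | inr _, inl m => inl m
  end.

Lemma cod0_in k : inA (dom k) -> cod0 (inr k) = inr (cod k).
Proof. intro h. simpl. destruct excluded_middle_informative; [reflexivity|contradiction]. Qed.
Lemma cod0_cross k a : ~ inA (dom k) -> cod k = jo a -> cod0 (inr k) = inl (Fo a).
Proof. intros n e. simpl. destruct excluded_middle_informative; [contradiction|]. apply cls_in; auto. Qed.
Lemma cod0_out k : ~ inA (cod k) -> cod0 (inr k) = inr (cod k).
Proof.
  intros n. simpl. destruct excluded_middle_informative as [h|h].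
  - reflexivity.
  - apply cls_out; auto.
Qed.
Lemma cmp0_cross m k a : ~ inA (dom k) -> cod k = jo a -> cmp0 (inl m) (inr k) = inr (cmp (jm (pf a m)) k).
Proof.
  intros n e. simpl. destruct excluded_middle_informative; [contradiction|].
  destruct excluded_middle_informative as [h|h].
  - rewrite (aof_eq a _ h (eq_sym e)). reflexivity.
  - exfalso; apply h; exists a; auto.
Qed.

Lemma cod0_inr_cases k :
  (cod0 (inr k) = inr (cod k) /\ (inA (dom k) \/ ~ inA (cod k))) \/
  (exists a, ~ inA (dom k) /\ cod k = jo a /\ cod0 (inr k) = inl (Fo a)).
Proof.
  destruct (classic (inA (dom k))) as [h|h].
  - left. split; [apply cod0_in; auto| left; auto].
  - destruct (classic (inA (cod k))) as [[a ha]|h'].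
    + right. exists a. split; [auto|split; [auto|apply cod0_cross; auto]].
    + left. split; [apply cod0_out; auto| right; auto].
Qed.

Lemma cod0_r k b : cod0 (inr k) = inr b -> cod k = b /\ (inA (dom k) \/ ~ inA (cod k)).
Proof.
  intro e. destruct (cod0_inr_cases k) as [[e1 h]|[a [_ [_ e2]]]].
  - rewrite e1 in e. injection e; intros; subst; auto.
  - rewrite e2 in e; discriminate.
Qed.
Lemma cod0_l k c : cod0 (inr k) = inl c -> exists a, ~ inA (dom k) /\ cod k = jo a /\ Fo a = c.
Proof.
  intro e. destruct (cod0_inr_cases k) as [[e1 h]|[a [n [e2 e3]]]].
  - rewrite e1 in e; discriminate.
  - rewrite e3 in e. injection e; intros; subst. exists a; auto.
Qed.

Lemma dom_idm0 x : dom0 (idm0 x) = x.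
Proof. destruct x; simpl; rewrite dom_idm; reflexivity. Qed.
Lemma cod_idm0 x : cod0 (idm0 x) = x.
Proof.
  destruct x as [c|b]; [simpl; rewrite cod_idm; reflexivity|].
  unfold idm0. destruct (cod0_inr_cases (idm b)) as [[e1 _]|[a [n [e _]]]].
  - rewrite e1, cod_idm; reflexivity.
  - exfalso. apply n. rewrite dom_idm. rewrite cod_idm in e. exists a; auto.
Qed.

Lemma dom_jm_pf a m : dom m = Fo a -> dom (jm (pf a m)) = jo a.
Proof. intro h. rewrite (Jf1 A B J HJ). rewrite (proj1 (Fl1 a m h)). reflexivity. Qed.

Lemma dom_cmp0 f g : cod0 f = dom0 g -> dom0 (cmp0 g f) = dom0 f.
Proof.
  destruct f as [m|k], g as [m'|k']; intro H.
  - simpl in *. injection H; intro H'. rewrite dom_cmp; auto.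
  - simpl in H; discriminate.
  - cbn [dom0] in H. destruct (cod0_l k _ H) as [a [n [e e']]].
    rewrite (cmp0_cross m' k a n e). cbn [dom0]. f_equal. apply dom_cmp.
    rewrite dom_jm_pf; auto.
  - cbn [dom0] in H. destruct (cod0_r k _ H) as [e _]. cbn [cmp0 dom0]. f_equal. apply dom_cmp; auto.
Qed.

Lemma cod_cmp0 f g : cod0 f = dom0 g -> cod0 (cmp0 g f) = cod0 g.
Proof.
  destruct f as [m|k], g as [m'|k']; intro H.
  - simpl in *. injection H; intro H'. rewrite cod_cmp; auto.
  - simpl in H; discriminate.
  - cbn [dom0] in H. destruct (cod0_l k _ H) as [a [n [e e']]].
    rewrite (cmp0_cross m' k a n e).
    assert (hd : dom m' = Fo a) by auto.
    destruct (Fl1 a m' hd) as [h1 h2].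
    assert (hc : cod k = dom (jm (pf a m'))) by (rewrite dom_jm_pf; auto).
    rewrite (cod0_cross _ (cod (pf a m'))).
    + simpl. f_equal. rewrite <- Ff2, h2. reflexivity.
    + rewrite dom_cmp; auto.
    + rewrite cod_cmp by auto. apply (Jf2 A B J HJ).
  - cbn [dom0] in H. destruct (cod0_r k _ H) as [e hh]. cbn [cmp0].
    unfold cod0. rewrite dom_cmp, cod_cmp by auto.
    destruct (excluded_middle_informative (inA (dom k))) as [i|i];
    destruct (excluded_middle_informative (inA (dom k'))) as [i'|i']; auto.
    + exfalso. apply i'. rewrite <- e. apply inA_cod; auto.
    + destruct hh as [hh|hh]; [contradiction|]. rewrite e in hh. contradiction.
Qed.

Lemma cmp_idl0 f : cmp0 (idm0 (cod0 f)) f = f.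
Proof.
  destruct f as [m|k]; [simpl; rewrite cmp_idl; reflexivity|].
  destruct (cod0_inr_cases k) as [[e1 _]|[a [n [e e2]]]].
  - rewrite e1. simpl. rewrite cmp_idl. reflexivity.
  - rewrite e2. cbn [idm0]. rewrite (cmp0_cross _ k a n e). rewrite Fl2, (Jf3 A B J HJ), <- e, cmp_idl.
    reflexivity.
Qed.
Lemma cmp_idr0 f : cmp0 f (idm0 (dom0 f)) = f.
Proof. destruct f; simpl; rewrite cmp_idr; reflexivity. Qed.

Lemma cmp_assoc0 f g h : cod0 f = dom0 g -> cod0 g = dom0 h ->
  cmp0 h (cmp0 g f) = cmp0 (cmp0 h g) f.
Proof.
  destruct f as [m1|k1], g as [m2|k2], h as [m3|k3]; intros H1 H2; cbn [dom0] in H1, H2;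
    try (simpl in H1; discriminate); try (simpl in H2; discriminate).
  - simpl in *. injection H1; injection H2; intros. rewrite cmp_assoc; auto.
  - destruct (cod0_l k1 _ H1) as [a [n [e e']]]. simpl in H2. injection H2; intro H2'.
    assert (hd : dom m2 = Fo a) by auto.
    destruct (Fl1 a m2 hd) as [h1 h2].
    assert (hc : cod k1 = dom (jm (pf a m2))) by (rewrite dom_jm_pf; auto).
    rewrite (cmp0_cross m2 k1 a n e).
    rewrite (cmp0_cross m3 _ (cod (pf a m2))).
    + change (cmp0 (inl m3) (inl m2)) with (inl (cmp m3 m2) : mor0).
      rewrite (cmp0_cross _ k1 a n e).
      assert (hd3 : dom m3 = Fo (cod (pf a m2))) by (rewrite <- H2', <- Ff2, h2; reflexivity).
      rewrite (Fl3 a m2 m3 hd hd3). f_equal.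
      destruct (Fl1 _ m3 hd3) as [h3 _].
      rewrite (Jf4 A B J HJ) by auto. rewrite cmp_assoc; auto.
      rewrite (Jf2 A B J HJ), (Jf1 A B J HJ), h3. reflexivity.
    + rewrite dom_cmp; auto.
    + rewrite cod_cmp by auto. apply (Jf2 A B J HJ).
  - destruct (cod0_r k1 _ H1) as [e hh].
    destruct (cod0_l k2 _ H2) as [a [n [e2 e3]]].
    assert (n1 : ~ inA (dom k1)).
    { intro i. destruct hh as [hh|hh].
      - apply n. rewrite <- e. apply inA_cod; auto.
      - apply n. rewrite <- e. apply inA_cod; auto. }
    change (cmp0 (inr k2) (inr k1)) with (inr (cmp k2 k1) : mor0). rewrite (cmp0_cross m3 k2 a n e2).
    rewrite (cmp0_cross m3 _ a).
    + cbn [cmp0]. f_equal. apply cmp_assoc; auto. rewrite dom_jm_pf; auto.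
    + rewrite dom_cmp; auto.
    + rewrite cod_cmp; auto.
  - destruct (cod0_r k1 _ H1) as [e _]. destruct (cod0_r k2 _ H2) as [e' _].
    cbn [cmp0]. f_equal. apply cmp_assoc; auto.
Qed.

Definition D0 : Cat :=
  @Build_Cat ob0 mor0 dom0 cod0 idm0 cmp0 dom_idm0 cod_idm0 dom_cmp0 cod_cmp0 cmp_idl0 cmp_idr0 cmp_assoc0.

Definition fb0m (k : mor B) : mor D0 :=
  match excluded_middle_informative (inA (dom k)) with
  | left h => inl (Fm (pj (aof _ h) k))
  | right _ => inr k end.
Lemma fb0m_in a k : dom k = jo a -> fb0m k = inl (Fm (pj a k)).
Proof.
  intro e. unfold fb0m. destruct excluded_middle_informative as [h|h].
  - rewrite (aof_eq a _ h (eq_sym e)). reflexivity.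
  - exfalso; apply h; exists a; auto.
Qed.
Lemma fb0m_out k : ~ inA (dom k) -> fb0m k = inr k.
Proof. intro n. unfold fb0m. destruct excluded_middle_informative; [contradiction|reflexivity]. Qed.

Definition Fb0 : FunD B D0 := @Build_FunD B D0 cls fb0m.
Definition Jb0 : FunD C D0 := @Build_FunD C D0 (fun c => inl c) (fun m => inl m).

Lemma Fb0_functor : is_functor Fb0.
Proof.
  split; [|split; [|split]]; cbn [fo fm Fb0].
  - intro k. destruct (classic (inA (dom k))) as [[a ha]|n].
    + rewrite (fb0m_in a k (eq_sym ha)), (cls_in a _ ha). simpl. f_equal.
      rewrite Ff1. f_equal. apply (Jl1 A B J HJ). auto.
    + rewrite (fb0m_out k n), (cls_out _ n). reflexivity.
  - intro k. destruct (classic (inA (dom k))) as [[a ha]|n].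
    + rewrite (fb0m_in a k (eq_sym ha)). destruct (Jl1 A B J HJ a k (eq_sym ha)) as [h1 h2].
      rewrite (cls_in (cod (pj a k))).
      * simpl. rewrite Ff2. reflexivity.
      * rewrite <- (Jf2 A B J HJ), h2. reflexivity.
    + rewrite (fb0m_out k n). simpl. destruct excluded_middle_informative; [contradiction|reflexivity].
  - intro b. destruct (classic (inA b)) as [[a ha]|n].
    + subst b. rewrite (fb0m_in a (idm (jo a)) (dom_idm _ _)), (cls_in a _ eq_refl).
      rewrite (Jl2 A B J HJ), Ff3. reflexivity.
    + rewrite fb0m_out by (rewrite dom_idm; auto). rewrite (cls_out _ n). reflexivity.
  - intros k k' e. destruct (classic (inA (dom k))) as [[a ha]|n].
    + destruct (Jl1 A B J HJ a k (eq_sym ha)) as [h1 h2].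
      assert (hk' : dom k' = jo (cod (pj a k))) by (rewrite <- e, <- (Jf2 A B J HJ), h2; reflexivity).
      rewrite (fb0m_in a (cmp k' k)) by (rewrite dom_cmp; auto).
      rewrite (fb0m_in a k (eq_sym ha)), (fb0m_in _ k' hk').
      rewrite (Jl3 A B J HJ a k k' (eq_sym ha) hk'). simpl. f_equal.
      apply Ff4. destruct (Jl1 A B J HJ _ k' hk') as [h3 _]. auto.
    + rewrite (fb0m_out (cmp k' k)) by (rewrite dom_cmp; auto).
      rewrite (fb0m_out k n).
      destruct (classic (inA (cod k))) as [[a ha]|n'].
      * rewrite (fb0m_in a k') by (rewrite <- e; auto).
        rewrite (cmp0_cross _ k a n (eq_sym ha)).
        rewrite pf_Fm by (apply (Jl1 A B J HJ); rewrite <- e; auto).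
        f_equal. f_equal. symmetry. apply (Jl1 A B J HJ). rewrite <- e; auto.
      * rewrite (fb0m_out k') by (rewrite <- e; auto). reflexivity.
Qed.

Lemma Jb0_functor : is_functor Jb0.
Proof. split; [|split; [|split]]; reflexivity. Qed.

Lemma Fb0_Jb0_comm : fun_eq (fcomp Fb0 (lget J)) (fcomp Jb0 (lget F)).
Proof.
  split.
  - intro a. simpl. apply cls_in. reflexivity.
  - intro f. simpl. rewrite (fb0m_in (dom f)) by apply (Jf1 A B J HJ).
    rewrite pj_jm by reflexivity. reflexivity.
Qed.

Section Med.
Variables (X : Cat) (P : FunD B X) (Q : FunD C X).
Hypothesis HP : is_functor P.
Hypothesis HQ : is_functor Q.
Hypothesis HPQ : fun_eq (fcomp P (lget J)) (fcomp Q (lget F)).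

Definition Phi : FunD D0 X :=
  @Build_FunD D0 X (fun x : ob0 => match x with inl c => fo Q c | inr b => fo P b end)
     (fun f : mor0 => match f with inl m => fm Q m | inr k => fm P k end).

Lemma Phi_functor : is_functor Phi.
Proof.
  destruct HP as [P1 [P2 [P3 P4]]]. destruct HQ as [Q1 [Q2 [Q3 Q4]]].
  destruct HPQ as [E1 E2]. simpl in E1, E2.
  split; [|split; [|split]].
  - intros [m|k]; simpl; auto.
  - intros [m|k]; [simpl; auto|].
    destruct (cod0_inr_cases k) as [[e1 _]|[a [n [e e2]]]].
    + change (@cod D0 (inr k)) with (cod0 (inr k)). rewrite e1. simpl. auto.
    + change (@cod D0 (inr k)) with (cod0 (inr k)). rewrite e2. simpl. rewrite P2, e. auto.
  - intros [c|b]; simpl; auto.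
  - intros [m|k] [m'|k'] H; change (@cod D0) with cod0 in H; change (@dom D0) with dom0 in H.
    + simpl in *. injection H; intro. auto.
    + simpl in H; discriminate.
    + cbn [dom0] in H. destruct (cod0_l k _ H) as [a [n [e e']]].
      change (@cmp D0) with cmp0. rewrite (cmp0_cross m' k a n e). simpl.
      rewrite P4 by (rewrite dom_jm_pf; auto). f_equal. rewrite E2.
      f_equal. apply Fl1. auto.
    + cbn [dom0] in H. destruct (cod0_r k _ H) as [e _]. simpl. auto.
Qed.

Lemma Phi_Fb0 : fun_eq (fcomp Phi Fb0) P.
Proof.
  destruct HPQ as [E1 E2]. simpl in E1, E2.
  split; simpl.
  - intro b. destruct (classic (inA b)) as [[a ha]|n].
    + rewrite (cls_in a _ ha). subst b. auto.
    + rewrite (cls_out _ n). reflexivity.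
  - intro k. destruct (classic (inA (dom k))) as [[a ha]|n].
    + rewrite (fb0m_in a k (eq_sym ha)). rewrite <- E2. f_equal. apply (Jl1 A B J HJ). auto.
    + rewrite (fb0m_out k n). reflexivity.
Qed.

Lemma Phi_Jb0 : fun_eq (fcomp Phi Jb0) Q.
Proof. split; reflexivity. Qed.
End Med.
End D0.

Definition pick {T} (d : T) (P : T -> Prop) : T :=
  match excluded_middle_informative (exists x, P x) with
  | left h => proj1_sig (constructive_indefinite_description P h)
  | right _ => d end.
Lemma pick_spec {T} (d : T) (P : T -> Prop) : (exists x, P x) -> P (pick d P).
Proof.
  intro h. unfold pick. destruct excluded_middle_informative as [h'|h']; [|contradiction].
  destruct constructive_indefinite_description; assumption.
Qed.

Definition dput {X Y : Cat} (G : FunD X Y) (x : ob X) (b : mor Y) : mor X :=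
  pick (idm x) (fun a => dom a = x /\ fm G a = b).

Section Dput.
Variables (X Y : Cat) (G : FunD X Y).
Hypothesis HG : is_functor G.
Hypothesis HO : discrete_opfibration G.
Lemma dput_spec x b : dom b = fo G x -> dom (dput G x b) = x /\ fm G (dput G x b) = b.
Proof.
  intro h. unfold dput. apply pick_spec. destruct (HO x b h) as [a [Ha _]]. exists a; exact Ha.
Qed.
Lemma dput_uniq x b a : dom b = fo G x -> dom a = x -> fm G a = b -> a = dput G x b.
Proof.
  intros h h1 h2. destruct (HO x b h) as [u [_ Hu]].
  rewrite <- (Hu a (conj h1 h2)). apply Hu. apply dput_spec; auto.
Qed.
Lemma dput_lens : is_lens_structure G (dput G).
Proof.
  destruct HG as [G1 [G2 [G3 G4]]].
  split; [|split].
  - exact dput_spec.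
  - intro x. symmetry. apply dput_uniq.
    + apply dom_idm.
    + apply dom_idm.
    + apply G3.
  - intros x b b' hb hb'. destruct (dput_spec x b hb) as [h1 h2].
    destruct (dput_spec _ b' hb') as [h3 h4].
    symmetry. apply dput_uniq.
    + rewrite dom_cmp; auto. rewrite <- h2, G2. auto.
    + rewrite dom_cmp; auto.
    + rewrite G4 by auto. rewrite h2, h4. reflexivity.
Qed.
Lemma lens_struct_unique p : is_lens_structure G p -> forall x b, dom b = fo G x -> p x b = dput G x b.
Proof.
  intros [P1 _] x b h. destruct (P1 x b h). apply dput_uniq; auto.
Qed.
End Dput.

Lemma fcomp_functor {X Y Z : Cat} (G : FunD Y Z) (F : FunD X Y) :
  is_functor G -> is_functor F -> is_functor (fcomp G F).
Proof.
  intros [G1 [G2 [G3 G4]]] [F1 [F2 [F3 F4]]].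
  split; [|split; [|split]]; simpl; intros.
  - rewrite G1, F1; auto.
  - rewrite G2, F2; auto.
  - rewrite F3, G3; auto.
  - rewrite F4 by auto. rewrite G4; auto. rewrite F1, F2. f_equal. auto.
Qed.

Definition idF (X : Cat) : FunD X X := {| fo := fun x => x; fm := fun f => f |}.
Lemma idF_functor X : is_functor (idF X).
Proof. split; [|split; [|split]]; reflexivity. Qed.

Lemma fun_eq_trans {X Y} (F G H : FunD X Y) : fun_eq F G -> fun_eq H G -> fun_eq F H.
Proof. intros [a b] [c d]; split; intros; rewrite ?a, ?b, ?c, ?d; auto. Qed.

Lemma law_transfer {Y D X : Cat} (G : FunD Y D) (L : LensD Y X) (K0 : FunD D X)
  (putK : ob D -> mor X -> mor D) :
  is_functor G -> is_lens L -> is_functor K0 -> fun_eq (fcomp K0 G) (lget L) ->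
  (forall y e, dom e = fo (lget L) y -> putK (fo G y) e = fm G (lput L y e)) ->
  forall y,
  (forall e, dom e = fo K0 (fo G y) -> dom (putK (fo G y) e) = fo G y /\ fm K0 (putK (fo G y) e) = e) /\
  putK (fo G y) (idm (fo K0 (fo G y))) = idm (fo G y) /\
  (forall e e', dom e = fo K0 (fo G y) -> dom e' = fo K0 (cod (putK (fo G y) e)) ->
     putK (fo G y) (cmp e' e) = cmp (putK (cod (putK (fo G y) e)) e') (putK (fo G y) e)).
Proof.
  intros [G1 [G2 [G3 G4]]] [[L1 [L2 [L3 L4]]] [P1 [P2 P3]]] [K1 [K2 [K3 K4]]] [E1 E2] Hc y.
  simpl in E1, E2.
  split; [|split].
  - intros e he. rewrite E1 in he. rewrite (Hc y e he). destruct (P1 y e he) as [h1 h2].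
    rewrite G1, h1. split; auto. rewrite E2. auto.
  - rewrite E1. rewrite Hc by apply dom_idm. rewrite P2, G3. reflexivity.
  - intros e e' he he'. rewrite E1 in he. rewrite (Hc y e he) in *.
    destruct (P1 y e he) as [h1 h2].
    rewrite G2, E1 in he'.
    assert (hc : cod e = dom e') by (rewrite he', <- L2, h2; reflexivity).
    rewrite G2. rewrite (Hc _ e' he').
    rewrite Hc by (rewrite dom_cmp; auto).
    rewrite (P3 y e e' he he'). apply G4.
    destruct (P1 _ e' he'); auto.
Qed.

Section Main.
Variables (A B C D : Cat) (J : LensD A B) (F : LensD A C) (Fb : FunD B D) (Jb : FunD C D).
Hypothesis HJ : is_lens J.
Hypothesis HF : is_lens F.
Hypothesis HM : lens_monic J.
Hypothesis HD : discrete_opfibration (lget F).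
Hypothesis HFb : is_functor Fb.
Hypothesis HJb : is_functor Jb.
Hypothesis Hpush : is_pushout_cat (lget J) (lget F) Fb Jb.
Local Notation jo := (fo (lget J)).
Local Notation jm := (fm (lget J)).
Local Notation Fo := (fo (lget F)).
Local Notation Fm := (fm (lget F)).
Local Notation pj := (lput J).
Local Notation pf := (lput F).

Let M1 := proj1 (monic_props A B J HJ HM).
Let M2 := proj2 (monic_props A B J HJ HM).
Let D0' := D0 A B C J F HJ HF M1.
Let Fb0' := Fb0 A B C J F HJ HF M1.
Let Jb0' := Jb0 A B C J F HJ HF M1.
Let Hcomm := proj1 Hpush.
Let PsiS := constructive_indefinite_description _
   (proj2 Hpush D0' Fb0' Jb0' (Fb0_functor A B C J F HJ HF M1 HD) (Jb0_functor A B C J F HJ HF M1)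
      (Fb0_Jb0_comm A B C J F HJ HF M1 M2)).
Let Psi := proj1_sig PsiS.
Let Phi' := Phi A B C J F HJ HF M1 D Fb Jb.

Lemma Psi_functor : is_functor Psi.
Proof. exact (proj1 (proj2_sig PsiS)). Qed.
Lemma PsiF_o b : fo Psi (fo Fb b) = cls A B C J F b.
Proof. exact (proj1 (proj1 (proj2 (proj2_sig PsiS))) b). Qed.
Lemma PsiF_m k : fm Psi (fm Fb k) = fb0m A B C J F HJ HF M1 k.
Proof. exact (proj2 (proj1 (proj2 (proj2_sig PsiS))) k). Qed.
Lemma PsiJ_o c : fo Psi (fo Jb c) = inl c.
Proof. exact (proj1 (proj1 (proj2 (proj2 (proj2_sig PsiS)))) c). Qed.
Lemma PsiJ_m m : fm Psi (fm Jb m) = inl m.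
Proof. exact (proj2 (proj1 (proj2 (proj2 (proj2_sig PsiS)))) m). Qed.

Lemma PhiF_o b : fo Phi' (cls A B C J F b) = fo Fb b.
Proof. exact (proj1 (Phi_Fb0 A B C J F HJ HF M1 D Fb Jb Hcomm) b). Qed.
Lemma PhiF_m k : fm Phi' (fb0m A B C J F HJ HF M1 k) = fm Fb k.
Proof. exact (proj2 (Phi_Fb0 A B C J F HJ HF M1 D Fb Jb Hcomm) k). Qed.

Lemma PP : fun_eq (fcomp Phi' Psi) (idF D).
Proof.
  destruct (proj2 Hpush D Fb Jb HFb HJb Hcomm) as [K [_ [_ [_ Hu]]]].
  assert (HPhi : is_functor Phi') by exact (Phi_functor A B C J F HJ HF M1 D Fb Jb HFb HJb Hcomm).
  apply (fun_eq_trans _ K).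
  - apply Hu.
    + apply fcomp_functor; [exact HPhi|exact Psi_functor].
    + split; intros; simpl. rewrite PsiF_o; apply PhiF_o. rewrite PsiF_m; apply PhiF_m.
    + split; intros; simpl. rewrite PsiJ_o; reflexivity. rewrite PsiJ_m; reflexivity.
  - apply Hu.
    + apply idF_functor.
    + split; intros; reflexivity.
    + split; intros; reflexivity.
Qed.
Lemma PP_o x : fo Phi' (fo Psi x) = x. Proof. exact (proj1 PP x). Qed.
Lemma PP_m d : fm Phi' (fm Psi d) = d. Proof. exact (proj2 PP d). Qed.

Lemma Psi_dom d : fo Psi (dom d) = dom (fm Psi d).
Proof. symmetry. apply Psi_functor. Qed.

Lemma DJ : discrete_opfibration Jb.
Proof.
  intros c d hd.
  assert (hp : dom (fm Psi d) = inl c) by (rewrite <- Psi_dom, hd; apply PsiJ_o).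
  destruct (fm Psi d) as [m|k] eqn:E.
  - change (inl (dom m) = (inl c : ob D0')) in hp. injection hp; intro hm.
    exists m. split.
    + split; auto. rewrite <- (PP_m d), E. reflexivity.
    + intros m' [h1 h2]. rewrite <- h2, PsiJ_m in E. injection E; auto.
  - change (inr (dom k) = (inl c : ob D0')) in hp. discriminate.
Qed.

Lemma DF : discrete_opfibration Fb.
Proof.
  intros b d hd.
  assert (hp : dom (fm Psi d) = cls A B C J F b) by (rewrite <- Psi_dom, hd; apply PsiF_o).
  destruct (classic (inA A B J b)) as [[a ha]|n].
  - rewrite (cls_in A B C J F M1 a b ha) in hp. subst b.
    destruct (fm Psi d) as [m|k] eqn:E.
    + change (inl (dom m) = (inl (Fo a) : ob D0')) in hp. injection hp; intro hm.
      destruct (Fl1 A C F HF a m hm) as [h1 h2].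
      assert (hk : dom (jm (pf a m)) = jo a) by (rewrite (Jf1 A B J HJ), h1; reflexivity).
      exists (jm (pf a m)). split.
      * split; auto.
        rewrite <- PhiF_m. rewrite (fb0m_in A B C J F HJ HF M1 a _ hk).
        rewrite (pj_jm A B J HJ M2 a _ h1), h2. rewrite <- (PP_m d), E. reflexivity.
      * intros k' [h3 h4]. rewrite <- h4, PsiF_m, (fb0m_in A B C J F HJ HF M1 a _ h3) in E.
        injection E; intro e. rewrite <- e.
        destruct (Jl1 A B J HJ a k' h3) as [h5 h6].
        rewrite (pf_Fm A C F HF HD a _ h5). exact h6.
    + change (inr (dom k) = (inl (Fo a) : ob D0')) in hp. discriminate.
  - rewrite (cls_out A B C J F b n) in hp.
    destruct (fm Psi d) as [m|k] eqn:E.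
    + change (inl (dom m) = (inr b : ob D0')) in hp. discriminate.
    + change (inr (dom k) = (inr b : ob D0')) in hp. injection hp; intro hk.
      exists k. split.
      * split; auto. rewrite <- PhiF_m, (fb0m_out A B C J F HJ HF M1 k) by (rewrite hk; auto).
        rewrite <- (PP_m d), E. reflexivity.
      * intros k' [h3 h4]. rewrite <- h4, PsiF_m, (fb0m_out A B C J F HJ HF M1 k') in E
          by (rewrite h3; auto).
        injection E; auto.
Qed.

Lemma xcases x : (exists c, x = fo Jb c) \/ (exists b, x = fo Fb b).
Proof.
  rewrite <- (PP_o x). destruct (fo Psi x) as [c|b] eqn:E.
  - left; exists c; reflexivity.
  - right; exists b; reflexivity.
Qed.

Let FbL : LensD B D := {| lget := Fb; lput := dput Fb |}.
Let JbL : LensD C D := {| lget := Jb; lput := dput Jb |}.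

Lemma square : lens_eq (lcomp FbL J) (lcomp JbL F).
Proof.
  split; [exact Hcomm|].
  intros a d hd. simpl in hd |- *.
  pose proof Hcomm as [E1 E2]; simpl in E1, E2.
  assert (hd' : dom d = fo Jb (Fo a)) by (rewrite hd; auto).
  destruct (dput_spec C D Jb DJ (Fo a) d hd') as [h1 h2].
  set (m := dput Jb (Fo a) d) in *.
  destruct (Fl1 A C F HF a m h1) as [h3 h4].
  set (al := pf a m) in *.
  assert (e : jm al = dput Fb (jo a) d).
  { apply (dput_uniq B D Fb DF); auto.
    - rewrite (Jf1 A B J HJ), h3; reflexivity.
    - rewrite E2, h4; auto. }
  rewrite <- e. apply (pj_jm A B J HJ M2). exact h3.
Qed.

Section Univ.
Variables (X : Cat) (P : LensD B X) (Q : LensD C X).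
Hypothesis HP : is_lens P.
Hypothesis HQ : is_lens Q.
Hypothesis HPQ : lens_eq (lcomp P J) (lcomp Q F).

Let K0S := constructive_indefinite_description _
  (proj2 Hpush X (lget P) (lget Q) (proj1 HP) (proj1 HQ) (proj1 HPQ)).
Let K0 := proj1_sig K0S.
Lemma K0_functor : is_functor K0. Proof. exact (proj1 (proj2_sig K0S)). Qed.
Lemma K0F : fun_eq (fcomp K0 Fb) (lget P). Proof. exact (proj1 (proj2 (proj2_sig K0S))). Qed.
Lemma K0J : fun_eq (fcomp K0 Jb) (lget Q). Proof. exact (proj1 (proj2 (proj2 (proj2_sig K0S)))). Qed.
Lemma K0u : forall K' : FunD D X, is_functor K' ->
         fun_eq (fcomp K' Fb) (lget P) -> fun_eq (fcomp K' Jb) (lget Q) -> fun_eq K' K0.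
Proof. exact (proj2 (proj2 (proj2 (proj2_sig K0S)))). Qed.

Definition putK (x : ob D) (e : mor X) : mor D :=
  match fo Psi x with
  | inl c => fm Jb (lput Q c e)
  | inr b => fm Fb (lput P b e) end.

Lemma compatJ c e : putK (fo Jb c) e = fm Jb (lput Q c e).
Proof. unfold putK. rewrite PsiJ_o. reflexivity. Qed.

Lemma compatF b e : dom e = fo (lget P) b -> putK (fo Fb b) e = fm Fb (lput P b e).
Proof.
  intro he. unfold putK. rewrite PsiF_o.
  destruct (classic (inA A B J b)) as [[a ha]|n].
  - rewrite (cls_in A B C J F M1 a b ha). subst b.
    pose proof HPQ as [[E1 E2] E3]. simpl in E1, E2, E3.
    pose proof HP as [_ [P1 _]]. pose proof HQ as [_ [Q1 _]].
    destruct (P1 (jo a) e he) as [h1 h2].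
    destruct (Jl1 A B J HJ a _ h1) as [h3 h4].
    rewrite <- h4. pose proof Hcomm as [C1 C2]; simpl in C2. rewrite C2.
    rewrite (E3 a e he).
    assert (hq : dom e = fo (lget Q) (Fo a)) by (rewrite he; auto).
    destruct (Q1 (Fo a) e hq) as [h5 h6].
    destruct (Fl1 A C F HF a _ h5) as [_ h7]. rewrite h7. reflexivity.
  - rewrite (cls_out A B C J F b n). reflexivity.
Qed.

Definition KL : LensD D X := {| lget := K0; lput := putK |}.

Lemma KL_lens : is_lens KL.
Proof.
  split; [exact K0_functor|].
  pose proof (fun y => law_transfer Jb Q K0 putK HJb HQ K0_functor K0J (fun c e _ => compatJ c e) y) as TJ.
  pose proof (fun y => law_transfer Fb P K0 putK HFb HP K0_functor K0F compatF y) as TF.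
  split; [|split]; simpl.
  - intros x e he. destruct (xcases x) as [[c ->]|[b ->]].
    + apply (proj1 (TJ c)); auto.
    + apply (proj1 (TF b)); auto.
  - intros x. destruct (xcases x) as [[c ->]|[b ->]].
    + apply (proj1 (proj2 (TJ c))).
    + apply (proj1 (proj2 (TF b))).
  - intros x e e'. destruct (xcases x) as [[c ->]|[b ->]].
    + apply (proj2 (proj2 (TJ c))).
    + apply (proj2 (proj2 (TF b))).
Qed.

Lemma KL_F : lens_eq (lcomp KL FbL) P.
Proof.
  split; [exact K0F|].
  intros b e he. simpl in he |- *.
  pose proof K0F as [E1 _]. simpl in E1. rewrite E1 in he.
  rewrite (compatF b e he).
  pose proof HP as [_ [P1 _]]. destruct (P1 b e he) as [h1 _].
  symmetry. apply (dput_uniq B D Fb DF); auto.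
  pose proof HFb as [F1 _]. rewrite F1, h1. reflexivity.
Qed.

Lemma KL_J : lens_eq (lcomp KL JbL) Q.
Proof.
  split; [exact K0J|].
  intros c e he. simpl in he |- *.
  pose proof K0J as [E1 _]. simpl in E1. rewrite E1 in he.
  rewrite (compatJ c e).
  pose proof HQ as [_ [Q1 _]]. destruct (Q1 c e he) as [h1 _].
  symmetry. apply (dput_uniq C D Jb DJ); auto.
  pose proof HJb as [F1 _]. rewrite F1, h1. reflexivity.
Qed.

Lemma KL_uniq : forall K' : LensD D X, is_lens K' ->
  lens_eq (lcomp K' FbL) P -> lens_eq (lcomp K' JbL) Q -> lens_eq K' KL.
Proof.
  intros K' HK' [GF PF] [GJ PJ].
  split; [apply K0u; auto; apply HK'|].
  intros x e he. destruct HK' as [_ [L1 _]].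
  destruct (L1 x e he) as [h1 _].
  simpl. destruct (xcases x) as [[c ->]|[b ->]].
  - rewrite compatJ. rewrite <- (PJ c e he).
    simpl. destruct (dput_spec C D Jb DJ c _ h1) as [_ h2]. rewrite h2. reflexivity.
  - assert (hb : dom e = fo (lget P) b) by (rewrite he; apply GF).
    rewrite (compatF b e hb). rewrite <- (PF b e he).
    simpl. destruct (dput_spec B D Fb DF b _ h1) as [_ h2]. rewrite h2. reflexivity.
Qed.
End Univ.

Lemma main_result :
  exists (pF : ob B -> mor D -> mor B) (pJ : ob C -> mor D -> mor C),
    is_lens_structure Fb pF /\ is_lens_structure Jb pJ /\
    (forall pF', is_lens_structure Fb pF' ->
       forall x b, dom b = fo Fb x -> pF' x b = pF x b) /\
    (forall pJ', is_lens_structure Jb pJ' ->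
       forall x b, dom b = fo Jb x -> pJ' x b = pJ x b) /\
    is_pushout_lens J F {| lget := Fb; lput := pF |} {| lget := Jb; lput := pJ |}.
Proof.
  exists (dput Fb), (dput Jb).
  split; [apply dput_lens; [exact HFb| exact DF]|].
  split; [apply dput_lens; [exact HJb| exact DJ]|].
  split; [intros; apply (lens_struct_unique B D Fb DF); auto|].
  split; [intros; apply (lens_struct_unique C D Jb DJ); auto|].
  split; [exact square|].
  intros X P Q HP HQ HPQ.
  exists (KL X P Q HP HQ HPQ).
  split; [apply KL_lens|]. split; [apply KL_F|]. split; [apply KL_J|].
  apply KL_uniq.
Qed.
End Main.

Theorem theorem5p4 (A B C D : Cat) (J : LensD A B) (F : LensD A C)
    (Fb : FunD B D) (Jb : FunD C D) :
  is_lens J -> is_lens F -> lens_monic J ->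
  discrete_opfibration (lget F) ->
  is_functor Fb -> is_functor Jb ->
  is_pushout_cat (lget J) (lget F) Fb Jb ->
  exists (pF : ob B -> mor D -> mor B) (pJ : ob C -> mor D -> mor C),
    is_lens_structure Fb pF /\ is_lens_structure Jb pJ /\
    (forall pF', is_lens_structure Fb pF' ->
       forall x b, dom b = fo Fb x -> pF' x b = pF x b) /\
    (forall pJ', is_lens_structure Jb pJ' ->
       forall x b, dom b = fo Jb x -> pJ' x b = pJ x b) /\
    is_pushout_lens J F {| lget := Fb; lput := pF |} {| lget := Jb; lput := pJ |}.
Proof.
  intros HJ HF HM HD HFb HJb Hpush.
  exact (main_result A B C D J F Fb Jb HJ HF HM HD HFb HJb Hpush).
Qed.
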